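(* Let $S$ be a semigroup and let $M = S\cup\{1_M\}$ be the monoid obtained from $S$ by adjoining an identity element $1_M\notin S$ (so $1_M s = s1_M = s$ for all $s\in M$ and $S$ is a subsemigroup of $M$). Then $M$ is sofic.
   Context: A semigroup is a set with an associative binary operation. For a non-empty finite set $X$, $\mathrm{Map}(X)$ is the monoid of all maps $X\to X$ under composition (identity $\mathrm{Id}_X$) with the Hamming metric $d_X(f,g)=|\{x\in X : f(x)\ne g(x)\}|/|X|$. For a monoid $M$, finite $K\subset M$ and $\varepsilon,\alpha>0$, a map $\varphi\colon M\to\mathrm{Map}(X)$ is a $(K,\varepsilon)$-morphism if $d_X(\varphi(k_1k_2),\varphi(k_1)\varphi(k_2))\le\varepsilon$ for all $k_1,k_2\in K$ and $d_X(\varphi(1_M),\mathrm{Id}_X)\le\varepsilon$; it is $(K,\alpha)$-injective if $d_X(\varphi(k_1),\varphi(k_2))\ge\alpha$ for all distinct $k_1,k_2\in K$. $M$ is sofic if for every finite $K\subset M$ and every $\varepsilon>0$ there exist a non-empty finite set $X$ and a $(K,1-\varepsilon)$-injective $(K,\varepsilon)$-morphism $\varphi\colon M\to\mathrm{Map}(X)$. *)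

(* Defs.v *)
From mathcomp Require Import all_boot.
From Stdlib Require Import Reals List.
Set Implicit Arguments. Unset Strict Implicit. Unset Printing Implicit Defensive.

Local Open Scope R_scope.

Definition hamming (X : finType) (f g : X -> X) : R :=
  INR #|[pred x | f x != g x]| / INR #|X|.

Definition is_Keps_morphism (M : Type) (mul : M -> M -> M) (one : M)
  (X : finType) (K : list M) (eps : R) (phi : M -> X -> X) : Prop :=
  (forall k1 k2, In k1 K -> In k2 K ->
     hamming (phi (mul k1 k2)) (fun x => phi k1 (phi k2 x)) <= eps)
  /\ hamming (phi one) (fun x => x) <= eps.

Definition is_Kalpha_injective (M : Type) (X : finType) (K : list M)
  (alpha : R) (phi : M -> X -> X) : Prop :=
  forall k1 k2, In k1 K -> In k2 K -> k1 <> k2 -> alpha <= hamming (phi k1) (phi k2).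

Definition sofic_monoid (M : Type) (mul : M -> M -> M) (one : M) : Prop :=
  forall (K : list M) (eps : R), 0 < eps ->
    exists (X : finType), is_true (0 < #|X|)%nat /\
      exists phi : M -> X -> X,
        @is_Kalpha_injective M X K (1 - eps) phi /\
        @is_Keps_morphism M mul one X K eps phi.

(* M = S ∪ {1_M}: the monoid obtained by adjoining an identity (None) to a semigroup S. *)
Definition adjoin_one_mul (S : Type) (op : S -> S -> S) (x y : option S) : option S :=
  match x, y with
  | None, _ => y
  | _, None => x
  | Some a, Some b => Some (op a b)
  end.

(* Main.v *)
Require Import Defs.
From mathcomp Require Import all_boot.
From Stdlib Require Import Reals List.
From Stdlib Require Import ClassicalEpsilon Lra Lia.
From mathcomp Require Import zify.

Section Constr.
Variables (S : Type) (op : S -> S -> S) (K : list (option S)) (m : nat).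
Let n := length K.
Definition XT : finType := ('I_n + 'I_m.+1)%type.
Definition dec (x : XT) : option S :=
  match x with inl i => List.nth (nat_of_ord i) K None | inr _ => None end.
Definition enc (a : option S) : XT :=
  match excluded_middle_informative (exists i : 'I_n, List.nth (nat_of_ord i) K None = a) with
  | left H => inl (proj1_sig (constructive_indefinite_description _ H))
  | right _ => inr ord0
  end.
Definition phi (a : option S) (x : XT) : XT :=
  match a with None => x | Some _ => enc (adjoin_one_mul op a (dec x)) end.

Lemma enc_dec a : In a K -> dec (enc a) = a.
Proof.
move=> /(In_nth _ _ None) [i [Hi Hn]].
rewrite /enc; case: excluded_middle_informative => [H|H].
  by case: constructive_indefinite_description.
exfalso; apply: H; exists (Ordinal (introT ltP Hi)); exact Hn.
Qed.

Lemma phi_inr a j : phi a (inr j) = match a with None => inr j | Some _ => enc a end.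
Proof. by case: a. Qed.
End Constr.

Lemma card_diff_upper (n m : nat) (f g : ('I_n + 'I_m.+1)%type -> ('I_n + 'I_m.+1)%type) :
  (forall j, f (inr j) = g (inr j)) -> (#|[pred x | f x != g x]| <= n)%N.
Proof.
move=> H.
have sub : [pred x | f x != g x] \subset [predC [pred x | x \in codom (@inr 'I_n 'I_m.+1)]].
  apply/subsetP => x; rewrite !inE; case: x => [i|j] /=.
    by move=> _; apply/codomP => -[y]. 
  by rewrite H eqxx.
have := subset_leq_card sub.
have := cardC [pred x | x \in codom (@inr 'I_n 'I_m.+1)].
have -> : #|[pred x | x \in codom (@inr 'I_n 'I_m.+1)]| = #|codom (@inr 'I_n 'I_m.+1)| by apply: eq_card.
rewrite card_codom; last by move=> a b [].
rewrite card_sum !card_ord => E; move=> /leq_trans; apply; by rewrite -(leq_add2l m.+1) E addnC.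
Qed.

Lemma card_diff_lower (n m : nat) (f g : ('I_n + 'I_m.+1)%type -> ('I_n + 'I_m.+1)%type) :
  (forall j, f (inr j) <> g (inr j)) -> (m.+1 <= #|[pred x | f x != g x]|)%N.
Proof.
move=> H.
have sub : codom (@inr 'I_n 'I_m.+1) \subset [pred x | f x != g x].
  apply/subsetP => x /codomP [j ->]; rewrite inE; apply/eqP; exact: H.
have := subset_leq_card sub.
rewrite card_codom; last by move=> a b [].
by rewrite card_ord.
Qed.

Theorem proposition4p8 (S : Type) (op : S -> S -> S)
  (op_assoc : forall a b c : S, op a (op b c) = op (op a b) c) :
  sofic_monoid (adjoin_one_mul op) None.
Proof.
move=> K eps Heps.
set n := length K.
have [m Hm] := INR_archimed eps (INR n) Heps.
have cardX : #|@XT S K m| = (n + m.+1)%N by rewrite card_sum !card_ord.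
have Npos : (0 < INR (n + m.+1))%R by apply: lt_0_INR; lia.
have key : (INR n <= eps * INR (n + m.+1))%R.
  have : (INR m <= INR (n + m.+1))%R by apply: le_INR; lia.
  nra.
exists (@XT S K m); split; first by rewrite cardX addnS.
exists (@phi S op K m); split.
- move=> k1 k2 H1 H2 Hne.
  have Hl : (m.+1 <= #|[pred x | @phi S op K m k1 x != @phi S op K m k2 x]|)%N.
    apply: card_diff_lower => j; rewrite !phi_inr.
    case: k1 H1 Hne => [s|]; case: k2 H2 => [t|] //= H2 H1 Hne E.
    + by apply: Hne; rewrite -(@enc_dec S K m _ H1) -(@enc_dec S K m _ H2) E.
    + by have := @enc_dec S K m _ H1; rewrite E.
    + by have := @enc_dec S K m _ H2; rewrite -E.
  rewrite /hamming cardX.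
  move/leP: Hl => Hl; apply le_INR in Hl; rewrite S_INR in Hl.
  apply (Rmult_le_reg_r (INR (n + m.+1))) => //.
  rewrite /Rdiv Rmult_assoc Rinv_l; last lra.
  rewrite plus_INR S_INR in key Npos *; nra.
- split.
  + move=> k1 k2 H1 H2.
    have Hu : (#|[pred x | @phi S op K m (adjoin_one_mul op k1 k2) x != @phi S op K m k1 (@phi S op K m k2 x)]| <= n)%N.
      apply: card_diff_upper => j.
      case: k1 H1 => [s|] H1; case: k2 H2 => [t|] H2 //=.
      by rewrite (@enc_dec S K m _ H2).
    rewrite /hamming cardX.
    move/leP: Hu => Hu; apply le_INR in Hu.
    apply (Rmult_le_reg_r (INR (n + m.+1))) => //.
    rewrite /Rdiv Rmult_assoc Rinv_l; last lra.
    lra.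
  + rewrite /hamming.
    have -> : #|[pred x : @XT S K m | @phi S op K m None x != x]| = 0%N.
      by apply: eq_card0 => x; rewrite inE eqxx.
    rewrite /= Rdiv_0_l; lra.
Qed.
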